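(* Let $b>0$ and let $f:\mathbb{R}\to\mathbb{R}$ be any function. Suppose $g_1,g_2:\mathbb{R}\to\mathbb{R}$ are measurable functions such that for every $q\in\mathbb{R}$, with $Z\sim\operatorname{Lap}(0,b)$, the expectations $\mathbb{E}[g_1(q+Z)]$ and $\mathbb{E}[g_2(q+Z)]$ exist (are finite) and $\mathbb{E}[g_1(q+Z)]=\mathbb{E}[g_2(q+Z)]=f(q)$. Then $g_1=g_2$ almost everywhere (with respect to Lebesgue measure).
   Context: $\operatorname{Lap}(0,b)$ denotes the Laplace distribution with density $\frac{1}{2b}e^{-|x|/b}$ on $\mathbb{R}$. *)

(* Defs.v *)
From HB Require Import structures.
From mathcomp Require Import all_boot all_order all_algebra.
From mathcomp Require Import all_classical all_reals all_analysis.
Set Implicit Arguments. Unset Strict Implicit. Unset Printing Implicit Defensive.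
Import Order.TTheory GRing.Theory Num.Theory.
Local Open Scope ring_scope.
Local Open Scope classical_set_scope.

Definition laplace_pdf (R : realType) (b : R) (x : R) : R :=
  (2 * b)^-1 * expR (- `|x| / b).

Definition laplace_shift_integrable (R : realType) (b : R) (g : R -> R) (q : R) : Prop :=
  (@lebesgue_measure R).-integrable setT
     (fun z => (g (q + z) * laplace_pdf b z)%:E).

Definition laplace_shift_expect (R : realType) (b : R) (g : R -> R) (q : R) : \bar R :=
  (\int[@lebesgue_measure R]_z (g (q + z) * laplace_pdf b z)%:E)%E.

(* Main.v *)
Require Import Defs.
From HB Require Import structures.
From mathcomp Require Import all_boot all_order all_algebra.
From mathcomp Require Import all_classical all_reals all_analysis.
From mathcomp Require Import measurable_realfun.
From mathcomp.algebra_tactics Require Import ring lra.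
Import Order.TTheory GRing.Theory Num.Theory.
Import numFieldNormedType.Exports.
Local Open Scope ring_scope.
Local Open Scope classical_set_scope.
Set Implicit Arguments. Unset Strict Implicit. Unset Printing Implicit Defensive.

Section shift.
Context {R : realType}.
Local Notation mu := (@lebesgue_measure R).
Variable q : R.
Definition shq (z : measurableTypeR R) : measurableTypeR R := q + z.
Lemma mshq : measurable_fun setT shq.
Proof. exact: measurable_funD. Qed.
Definition shmu (A : set (measurableTypeR R)) : \bar R := mu (shq @^-1` A).
Let shmu0 : shmu set0 = 0%E.
Proof. by rewrite /shmu preimage_set0 measure0. Qed.
Let shmu_ge0 A : (0 <= shmu A)%E.
Proof. by apply: measure_ge0. Qed.
Let shmu_sigma_additive : semi_sigma_additive shmu.
Proof.
move=> F mF tF mUF; rewrite /shmu preimage_bigcup.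
apply: measure_semi_sigma_additive.
- by move=> n; rewrite -[X in measurable X]setTI; exact: mshq.
- apply/trivIsetP => /= i j _ _ ij; rewrite -preimage_setI.
  by move/trivIsetP : tF => /(_ _ _ _ _ ij) ->//; rewrite preimage_set0.
- by rewrite -preimage_bigcup -[X in measurable X]setTI; exact: mshq.
Qed.
HB.instance Definition _ := isMeasure.Build _ _ _
  shmu shmu0 shmu_ge0 shmu_sigma_additive.

Lemma shmuE A : measurable A -> shmu A = mu A.
Proof.
move=> mA; apply/esym; apply: (@lebesgue_measure_unique R shmu) => // X [[x y] _ <-].
rewrite /shmu /=.
change (mu `]x, y] = mu (shq @^-1` `]x, y])).
have -> : shq @^-1` `]x, y] = `](x - q), (y - q)].
  apply/seteqP; split => z; rewrite /shq /= !in_itv /=.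
    by rewrite ltrBlDl lerBrDl.
  by rewrite ltrBlDl lerBrDl.
rewrite !lebesgue_measure_itv /= !lte_fin ltrD2r; case: ifP => //.
by rewrite -!EFinD opprB addrA subrK.
Qed.

Local Open Scope ereal_scope.
Lemma shift_int (f : R -> R) : measurable_fun setT f ->
  mu.-integrable setT (fun z => (f (q + z))%:E) ->
  mu.-integrable setT (fun x => (f x)%:E) /\
  \int[mu]_z (f (q + z))%:E = \int[mu]_x (f x)%:E.
Proof.
move=> mf intf.
have mEf : measurable_fun [set: measurableTypeR R] (fun x : measurableTypeR R => (f x)%:E).
  exact/measurable_EFinP.
have ip : (pushforward mu shq).-integrable setT (fun x => (f x)%:E).
  by apply: (integrable_pushforward mshq) => //; rewrite preimage_setT.
have eqm : forall A, measurable A -> A `<=` setT -> shmu A = mu A.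
  by move=> A mA _; exact: shmuE.
split.
  apply/integrableP; split => //.
  move/integrableP : ip => [_ H].
  have <- : \int[shmu]_x `|(f x)%:E| = \int[mu]_x `|(f x)%:E|.
    by apply: eq_measure_integral => A mA _; exact: shmuE.
  exact: H.
have := integral_pushforward mshq mEf (D := setT).
rewrite preimage_setT /= => /(_ mu intf measurableT) H.
rewrite -[LHS]H; change (\int[shmu]_y (f y)%:E = \int[mu]_x (f x)%:E).
by apply: eq_measure_integral => A mA _; exact: shmuE.

Qed.
End shift.

Lemma key (R : realType) (A F : R -> R) (a f K c x : R) :
  is_derive x 1 A a -> is_derive x 1 F f ->
  (\forall y \near x, A y + expR (y * c) * (K - F y) = 0) ->
  a + expR (x * c) * (- f) + (K - F x) * (expR (x * c) * c) = 0.
Proof.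
move=> dA dF N.
pose Phi := A + (expR \o (id * cst c)) * (cst K - F).
pose proof (_ : is_derive x 1 Phi _) as D.
have N' : \forall y \near x, Phi y = cst 0 y.
  near=> y; change (A y + expR (y * c) * (K - F y) = 0); exact: (near N y).
have := @near_eq_derive _ _ _ Phi (cst 0) x 1 N'.
rewrite derive_cst (derive_val (is_derive := D)) /= => <-.
rewrite /= scaler0 sub0r add0r.
rewrite -[RHS]/(a + (expR (x * c) * - f + (K - F x) * (expR (x * c) * (c * 1)))).
by rewrite mulr1 addrA.
Unshelve. all: by end_near.
Qed.

Section main.
Context {R : realType}.
Local Notation mu := (@lebesgue_measure R).
Variables (b : R) (h : R -> R).
Hypothesis hb : 0 < b.
Hypothesis mh : measurable_fun setT h.
Hypothesis H0 : forall q, mu.-integrable setT (fun x => (h x * laplace_pdf b (x - q))%:E)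
  /\ (\int[mu]_x (h x * laplace_pdf b (x - q))%:E = 0)%E.

Lemma mpdf (q : R) : measurable_fun [set: R] (fun x : R => laplace_pdf b (x - q)).
Proof.
rewrite /laplace_pdf; apply: measurable_funM => //.
apply: (measurableT_comp (@measurable_expR R)).
apply: measurable_funM => //; apply: measurableT_comp => //.
apply: measurableT_comp => //; exact: measurable_funB.
Qed.

Definition pp x := h x * expR (x / b).
Definition rr x := h x * expR (- x / b).
Definition AA q := (\int[mu]_(x in `]-oo, q]) pp x)%R.
Definition BB q := (\int[mu]_(x in `]q, +oo[) rr x)%R.

Lemma pdf_le q x : x <= q -> laplace_pdf b (x - q) = (2 * b)^-1 * expR (- q / b) * expR (x / b).
Proof.
move=> xq; rewrite /laplace_pdf ler0_norm ?subr_le0 // opprK -mulrA -expRD.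
by congr (_ * expR _); rewrite mulrBl addrC mulNr.
Qed.
Lemma pdf_gt q x : q < x -> laplace_pdf b (x - q) = (2 * b)^-1 * expR (q / b) * expR (- x / b).
Proof.
move=> xq; rewrite /laplace_pdf gtr0_norm ?subr_gt0 // -mulrA -expRD.
by congr (_ * expR _); rewrite opprB mulrBl !mulNr.
Qed.
Lemma bne0 : b != 0. Proof. by rewrite gt_eqF. Qed.

Lemma intp y : mu.-integrable `]-oo, y] (EFin \o pp).
Proof.
have [i _] := H0 y.
have i' : mu.-integrable `]-oo, y] (fun x => (h x * laplace_pdf b (x - y))%:E).
  by apply: integrableS i.
have mI : measurable (`]-oo, y] : set (measurableTypeR R)) by [].
have := integrableZl mI (2 * b * expR (y / b)) i'.
apply: eq_integrable => // x; rewrite inE /= in_itv /= => xy.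
rewrite -EFinM /pp pdf_le // mulNr expRN; congr EFin.
have e0 : expR (y / b) != 0 by rewrite gt_eqF ?expR_gt0.
have := bne0; move: e0; set E := expR (y / b); set F := expR (x / b) => e0 b0.
by field; rewrite e0 b0.
Qed.

Lemma intr y : mu.-integrable `]y, +oo[ (EFin \o rr).
Proof.
have [i _] := H0 y.
have i' : mu.-integrable `]y, +oo[ (fun x => (h x * laplace_pdf b (x - y))%:E).
  by apply: integrableS i.
have mI : measurable (`]y, +oo[ : set (measurableTypeR R)) by [].
have := integrableZl mI (2 * b * expR (- y / b)) i'.
apply: eq_integrable => // x; rewrite inE /= in_itv /= andbT => xy.
rewrite -EFinM /rr pdf_gt // !mulNr !expRN; congr EFin.
have e0 : expR (y / b) != 0 by rewrite gt_eqF ?expR_gt0.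
have e1 : expR (x / b) != 0 by rewrite gt_eqF ?expR_gt0.
have := bne0; move: e0 e1; set E := expR (y / b); set F := expR (x / b) => e0 e1 b0.
by field; rewrite e0 e1 b0.
Qed.
Lemma REL q : expR (- q / b) * AA q + expR (q / b) * BB q = 0.
Proof.
have [i I] := H0 q.
have E0 : (\int[mu]_x (h x * laplace_pdf b (x - q)))%R = 0 by rewrite /Rintegral I.
have SU : [set: R] = `]-oo, q] `|` `]q, +oo[.
  by rewrite -set_itvNyy (@itv_bndbnd_setU _ _ _ (BRight q)).
rewrite SU Rintegral_setU in E0 => //; last 2 first.
- by rewrite -SU.
- by apply/disj_setPS => z []; rewrite /= !in_itv /= andbT => /le_lt_trans /[apply]; rewrite ltxx.
have L : (\int[mu]_(x in `]-oo, q]) (h x * laplace_pdf b (x - q)))%R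
    = (2 * b)^-1 * expR (- q / b) * AA q.
  rewrite /AA -RintegralZl //; last exact: intp.
  apply: eq_Rintegral => x; rewrite inE /= in_itv /= => xq.
  by rewrite pdf_le // /pp; ring.
have L2 : (\int[mu]_(x in `]q, +oo[) (h x * laplace_pdf b (x - q)))%R
    = (2 * b)^-1 * expR (q / b) * BB q.
  rewrite /BB -RintegralZl //; last exact: intr.
  apply: eq_Rintegral => x; rewrite inE /= in_itv /= andbT => xq.
  by rewrite pdf_gt // /rr; ring.
rewrite L L2 in E0.
have : 2 * b * ((2 * b)^-1 * expR (- q / b) * AA q + (2 * b)^-1 * expR (q / b) * BB q) = 0.
  by rewrite E0 mulr0.
move=> <-; have := bne0 => b0; by field.
Qed.
Lemma loc_of (g : R -> R) : measurable_fun setT g ->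
  (forall N : R, exists E : set R, [/\ measurable E, [set x | `|x| <= N] `<=` E &
     mu.-integrable E (EFin \o g)]) -> locally_integrable setT g.
Proof.
move=> mg HE; split => //; first exact: openT.
move=> K _ cK.
have [M [_ HM]] := compact_bounded cK.
have KN : K `<=` [set x | `|x| <= M + 1] by apply: HM; rewrite ltrDl.
have [E [mE NE iE]] := HE (M + 1).
move/integrableP: iE => [_ iE].
rewrite (le_lt_trans _ iE) //; apply: ge0_subset_integral => //.
- exact: compact_measurable.
- apply/measurable_EFinP; apply: measurableT_comp => //.
  exact: measurable_funS mg.
- by move=> x /KN /NE.
Qed.

Lemma mpp : measurable_fun setT pp.
Proof.
apply: measurable_funM => //; apply: (measurableT_comp (@measurable_expR R)).
exact: measurable_funM.
Qed.

Lemma mrr : measurable_fun setT rr.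
Proof.
apply: measurable_funM => //; apply: (measurableT_comp (@measurable_expR R)).
by apply: measurable_funM => //; apply: measurableT_comp.
Qed.

Lemma locp : locally_integrable setT pp.
Proof.
apply: loc_of; first exact: mpp.
move=> N; exists `]-oo, N]; split => //; last exact: intp.
by move=> x /=; rewrite in_itv /= ler_norml => /andP[_ ->].
Qed.

Lemma locr : locally_integrable setT rr.
Proof.
apply: loc_of; first exact: mrr.
move=> N; exists `](- N - 1), +oo[; split => //; last exact: intr.
move=> x /=; rewrite in_itv /= andbT ler_norml => /andP[H _]; lra.
Qed.
Definition Fn (n : nat) (y : R) :=
  (\int[mu]_(t in [set` Interval (BRight (- n%:R)) (BRight y)]) (rr t))%R.

Lemma BBFn (n : nat) y : - n%:R <= y -> BB (- n%:R) - Fn n y = BB y.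
Proof.
move=> ny; rewrite /BB /Fn.
have := @Rintegral_itvB R rr (BRight (- n%:R)) (BInfty _ false) y (intr _).
by rewrite bnd_simp => ->.
Qed.

Lemma Azero_pt x (n : nat) : - n%:R < x ->
  derivable AA x 1 -> AA^`() x = pp x ->
  derivable (Fn n) x 1 -> (Fn n)^`() x = rr x -> AA x = 0.
Proof.
move=> nx dA1 dA2 dF1 dF2.
have dA : is_derive x 1 AA (pp x).
  by apply: is_derive_eq (derivableP dA1) _; rewrite -derive1E.
have dF : is_derive x 1 (Fn n) (rr x).
  by apply: is_derive_eq (derivableP dF1) _; rewrite -derive1E.
have b0 := bne0.
have N : \forall y \near x, AA y + expR (y * (2 / b)) * (BB (- n%:R) - Fn n y) = 0.
  near=> y.
  have ny : - n%:R < y by near: y; exact: lt_nbhsr.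
  rewrite BBFn ?ltW //.
  have := REL y; rewrite mulNr expRN.
  have -> : expR (y * (2 / b)) = expR (y / b) * expR (y / b).
    by rewrite -expRD; congr expR; field.
  have e0 : expR (y / b) != 0 by rewrite gt_eqF ?expR_gt0.
  move: e0; set E := expR (y / b) => e0 H.
  have -> : AA y + E * E * BB y = (E^-1 * AA y + E * BB y) * E by field.
  by rewrite H mul0r.
have := key dA dF N.
rewrite BBFn ?ltW // /pp /rr mulNr expRN.
have -> : expR (x * (2 / b)) = expR (x / b) * expR (x / b).
  by rewrite -expRD; congr expR; field.
have e0 : expR (x / b) != 0 by rewrite gt_eqF ?expR_gt0.
have := REL x; rewrite mulNr expRN.
move: e0; set E := expR (x / b) => e0 H1 H2.
have B0 : BB x = 0.
  have -> : BB x = (h x * E + E * E * - (h x * E^-1) + BB x * (E * E * (2 / b))) * (b / (2 * E * E)).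
    by field; rewrite e0 b0.
  by rewrite H2 mul0r.
have -> : AA x = (E^-1 * AA x + E * BB x) * E - E * E * BB x by field; rewrite e0.
by rewrite H1 B0 mul0r mulr0 subr0.
Unshelve. all: by end_near.
Qed.

Lemma Azero : {ae mu, forall x, AA x = 0 /\ derivable AA x 1 /\ AA^`() x = pp x}.
Proof.
have F1 := FTC1Ny intp locp.
have intFn (n : nat) : forall y,
    mu.-integrable [set` Interval (BRight (- n%:R)) (BRight y)] (EFin \o rr).
  move=> y; apply: integrableS (intr (- n%:R)) => //.
  by move=> z; rewrite /= !in_itv /= => /andP[-> _].
have F2 (n : nat) : {ae mu, forall x : R, (BRight (- n%:R) < BRight x)%O ->
    derivable (Fn n) x 1 /\ (Fn n)^`() x = rr x}.
  exact: (FTC1 (intFn n) locr).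
have F2' := ae_foralln F2.
apply: (filterS2 (ae_filter_ringOfSetsType mu) _ F1 F2') => x [dA1 dA2] Hn.
split => //.
pose n := (Num.Def.trunc `|x|).+1.
have nx : - n%:R < x.
  have := truncnS_gt `|x|; rewrite -/n => H1.
  have := ler_norml x `|x|; rewrite lexx => /esym/andP[H2 _].
  lra.
have [dF1 dF2] := Hn n ltac:(by rewrite bnd_simp).
exact: (Azero_pt nx dA1 dA2 dF1 dF2).
Qed.
Lemma pzero : {ae mu, forall x, pp x = 0}.
Proof.
have [N [mN N0 HN]] := Azero.
exists N; split => // x /= px0.
apply: contrapT => Nx.
have Px : AA x = 0 /\ derivable AA x 1 /\ AA^`() x = pp x.
  by apply: contrapT => nP; apply: Nx; apply: HN.
case: Px => [A0 [dA dA']].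
have cv : (fun t => t^-1 *: ((AA \o shift x) (t *: 1) - AA x)) @ 0^' --> pp x.
  rewrite -dA' derive1E /derive; exact: dA.
have px : 0 < `|pp x| by rewrite normr_gt0; apply/eqP.
have ne : \forall t \near 0^', AA (t + x) != 0.
  move/cvgrPdist_lt : cv => /(_ _ px).
  apply: filterS => t; apply: contraTN => /eqP At.
  by rewrite /= /shift /= -[t%:A]/(t * 1) mulr1 At A0 subrr scaler0 subr0 ltxx.
have [e e0 He] : exists2 e : R, 0 < e & forall t, `|t| < e -> t != 0 -> AA (t + x) != 0.
  move: ne => /nbhs_ballP [e /= e0 He]; exists e => // t te t0.
  by apply: He t0; rewrite /ball /= sub0r normrN.
have sub : `]x, x + e[ `<=` N.
  move=> z; rewrite /= in_itv /= => /andP[xz ze].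
  apply: HN => -[Az _]; move: (He (z - x)).
  rewrite subrK Az eqxx => /(_ _ _) /negP; apply => //.
    by rewrite gtr0_norm ?subr_gt0 // ltrBlDl.
  by rewrite subr_eq0 gt_eqF.
have mI : measurable (`]x, x + e[ : set (measurableTypeR R)) by [].
have := le_measure mu (mem_set mI) (mem_set mN) sub.
rewrite [X in (_ <= X)%E]N0 [X in (X <= _)%E]lebesgue_measure_itv /= lte_fin ltrDl e0 -EFinD addrAC subrr add0r lee_fin.
by rewrite leNgt e0.
Qed.
Lemma hzero : {ae mu, forall x, h x = 0}.
Proof.
apply: filterS pzero; first exact: (ae_filter_ringOfSetsType mu).
move=> x /eqP; rewrite /pp mulf_eq0 => /orP[/eqP //|].
by rewrite gt_eqF ?expR_gt0.
Qed.
End main.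

Theorem theorem10 (R : realType) (b : R) (f g1 g2 : R -> R) :
  0 < b ->
  measurable_fun setT g1 -> measurable_fun setT g2 ->
  (forall q : R,
     laplace_shift_integrable b g1 q /\ laplace_shift_integrable b g2 q /\
     laplace_shift_expect b g1 q = (f q)%:E /\
     laplace_shift_expect b g2 q = (f q)%:E) ->
  {ae (@lebesgue_measure R), forall x, g1 x = g2 x}.
Proof.
move=> hb m1 m2 H.
have mh : measurable_fun setT (fun x => g1 x - g2 x) by exact: measurable_funB.
have H0 : forall q, (@lebesgue_measure R).-integrable setT
    (fun x => ((g1 x - g2 x) * laplace_pdf b (x - q))%:E)
  /\ (\int[@lebesgue_measure R]_x ((g1 x - g2 x) * laplace_pdf b (x - q))%:E = 0)%E.
  move=> q; have [i1 [i2 [e1 e2]]] := H q.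
  pose f1 := fun x => g1 x * laplace_pdf b (x - q).
  pose f2 := fun x => g2 x * laplace_pdf b (x - q).
  have mf1 : measurable_fun setT f1 by exact: measurable_funM m1 (mpdf b q).
  have mf2 : measurable_fun setT f2 by exact: measurable_funM m2 (mpdf b q).
  have i1' : (@lebesgue_measure R).-integrable setT (fun z => (f1 (q + z))%:E).
    apply: eq_integrable i1 => // z _.
    by rewrite /f1 addrAC subrr add0r.
  have i2' : (@lebesgue_measure R).-integrable setT (fun z => (f2 (q + z))%:E).
    apply: eq_integrable i2 => // z _.
    by rewrite /f2 addrAC subrr add0r.
  have [j1 I1] := shift_int mf1 i1'.
  have [j2 I2] := shift_int mf2 i2'.
  have EE : (fun x => ((g1 x - g2 x) * laplace_pdf b (x - q))%:E) =
            (fun x => ((f1 x)%:E - (f2 x)%:E)%E).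
    by apply/funext => x; rewrite /f1 /f2 -EFinB mulrBl.
  rewrite EE; split.
    exact: (integrableB measurableT j1 j2).
  rewrite (integralB_EFin measurableT j1 j2) -I1 -I2.
  have -> : (\int[@lebesgue_measure R]_z (f1 (q + z))%:E = (f q)%:E)%E.
    rewrite -e1; apply: eq_integral => z _.
    by rewrite /f1 addrAC subrr add0r.
  have -> : (\int[@lebesgue_measure R]_z (f2 (q + z))%:E = (f q)%:E)%E.
    rewrite -e2; apply: eq_integral => z _.
    by rewrite /f2 addrAC subrr add0r.
  by rewrite subee.
have := hzero hb mh H0.
apply: filterS; first exact: (ae_filter_ringOfSetsType (@lebesgue_measure R)).
by move=> x /eqP; rewrite subr_eq0 => /eqP.
Qed.
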